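(* Assume the general single-user imperfect-prediction setting below. For $1\le\tau<\tau_n$ let $\tilde V^l(\tau)=V^l(\tau)$ and $\tilde V^u(\tau)=V^u(\tau)$, and for $\tau_n\le\tau\le\tau_n+D_n$ define $$\tilde V^l(\tau)=\max_{e\in\mathcal E,e>0}\Big\{-(1-p)\frac{1-[1-\zeta(i^{\min},e)]^{\tau-\tau_n}}{\zeta(i^{\min},e)}\lambda e+p\,\frac{1-[1-\zeta(i^{\min},e)]^{\tau}}{\zeta(i^{\min},e)}\big[-\lambda e+\zeta(i^{\min},e)\beta\big]\Big\},$$ $$\tilde V^u(\tau)=\sum_{z=\tau_n+1}^{\tau}\max_{e\in\mathcal E}\Big\{-\lambda e+\zeta(i^{\max},e)\big(p\beta-\max\{0,\tilde V^l(\tau_n),\tilde V^l(z-1)\}\big)\Big\}+p\sum_{z=1}^{\tau_n}\max_{e\in\mathcal E}\Big\{-\lambda e+\zeta(i^{\max},e)\big(\beta-\max\{0,V^l(z-1)\}\big)\Big\}.$$ Then for every state $i$ and every $1\le w\le D_n$, $$\max\{0,\tilde V^l(\tau_n),\tilde V^l(\tau_n+w)\}\le V^I(0,\tau_n+w,i)\le\min\{p\beta,\tilde V^u(\tau_n+w)\}.$$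
   Context: Setting: fix $\beta\ge0$, $\lambda\ge0$, $p\in(0,1]$, integers $\tau_n\ge1$, $D_n\ge1$. The channel is a Markov chain on $\{1,\dots,K\}$ with transition matrix $(P^{i,j})$; $\mathcal E\subset[0,\infty)$ is a finite set containing $0$ and a positive element; $\zeta(i,\cdot):\mathcal E\to[0,1]$ with $\zeta(i,0)=0$, $\zeta(i,e)>0$ for $e>0$, strictly increasing (restriction of a concave strictly increasing function). States are totally ordered by $\zeta$: for every $i,j$ either $\zeta(i,e)\ge\zeta(j,e)$ for all $e$ or $\le$ for all $e$; $i^{\max}$ ($i^{\min}$) is a state with $\zeta(i^{\max},e)\ge\zeta(i,e)$ ($\zeta(i^{\min},e)\le\zeta(i,e)$) for all $i,e$. Auxiliary functions: $V^l(0)=0$, $V^l(\tau)=\max_{e\in\mathcal E,e>0}\frac{1-[1-\zeta(i^{\min},e)]^{\tau}}{\zeta(i^{\min},e)}[-\lambda e+\zeta(i^{\min},e)\beta]$ for $\tau\ge1$; $V^u(0)=0$, $V^u(\tau)=\sum_{z=1}^{\tau}\max_{e\in\mathcal E}\{-\lambda e+\zeta(i^{\max},e)(\beta-\max\{0,V^l(z-1)\})\}$. Imperfect-prediction value function of a predicted packet (each prediction is correct with probability $p$, verified at its arrival time; $\tau$ = slots until deadline, deadline $\tau_n$ after arrival, window $D_n$): $V^I(0,0,i)=0$; $V^I(0,\tau,i)=\max_{e\in\mathcal E}\{-\lambda e+\zeta(i,e)\beta+(1-\zeta(i,e))\sum_jP^{i,j}V^I(0,\tau-1,j)\}$ for $1\le\tau\le\tau_n$;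 $V^I(0,\tau_n+1,i)=\max_{e\in\mathcal E}\{-\lambda e+\zeta(i,e)p\beta+p(1-\zeta(i,e))\sum_jP^{i,j}V^I(0,\tau_n,j)\}$; $V^I(0,\tau,i)=\max_{e\in\mathcal E}\{-\lambda e+\zeta(i,e)p\beta+(1-\zeta(i,e))\sum_jP^{i,j}V^I(0,\tau-1,j)\}$ for $\tau_n+2\le\tau\le\tau_n+D_n$. *)

(* Defs.v *)
From HB Require Import structures.
From mathcomp Require Import all_boot all_order all_algebra.
Set Implicit Arguments. Unset Strict Implicit. Unset Printing Implicit Defensive.
Import Order.TTheory GRing.Theory Num.Theory.
Local Open Scope ring_scope.

(* Maximum of a nonempty list (0 on the empty list; never used on an empty list
   under the hypotheses of the theorem). *)
Definition maxl (R : realFieldType) (s : seq R) : R :=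
  if s is x :: s' then foldr Num.max x s' else 0.

Definition maxE (R : realFieldType) (E : seq R) (f : R -> R) : R :=
  maxl [seq f e | e <- E].

Definition maxEpos (R : realFieldType) (E : seq R) (f : R -> R) : R :=
  maxl [seq f e | e <- E & 0 < e].

Definition Vl (R : realFieldType) (K : nat) (E : seq R) (zeta : 'I_K -> R -> R)
  (imin : 'I_K) (beta lambda : R) (tau : nat) : R :=
  if tau is 0 then 0 else
  maxEpos E (fun e => (1 - (1 - zeta imin e) ^+ tau) / zeta imin e *
                      (- lambda * e + zeta imin e * beta)).

Definition Vu (R : realFieldType) (K : nat) (E : seq R) (zeta : 'I_K -> R -> R)
  (imin imax : 'I_K) (beta lambda : R) (tau : nat) : R :=
  \sum_(1 <= z < tau.+1)
     maxE E (fun e => - lambda * e + zeta imax e *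
                (beta - Num.max 0 (Vl E zeta imin beta lambda z.-1))).

Fixpoint VI (R : realFieldType) (K : nat) (P : 'I_K -> 'I_K -> R) (E : seq R)
  (zeta : 'I_K -> R -> R) (beta lambda p : R) (taun : nat) (tau : nat)
  (i : 'I_K) {struct tau} : R :=
  match tau with
  | 0 => 0
  | t.+1 =>
    let cont := \sum_j P i j * VI P E zeta beta lambda p taun t j in
    if (tau <= taun)%N then
      maxE E (fun e => - lambda * e + zeta i e * beta + (1 - zeta i e) * cont)
    else if (tau == taun.+1)%N then
      maxE E (fun e => - lambda * e + zeta i e * p * beta
                       + p * (1 - zeta i e) * cont)
    else
      maxE E (fun e => - lambda * e + zeta i e * p * beta + (1 - zeta i e) * cont)
  end.

Definition tVl (R : realFieldType) (K : nat) (E : seq R) (zeta : 'I_K -> R -> R)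
  (imin : 'I_K) (beta lambda p : R) (taun : nat) (tau : nat) : R :=
  if (tau < taun)%N then Vl E zeta imin beta lambda tau else
  maxEpos E (fun e =>
     - (1 - p) * ((1 - (1 - zeta imin e) ^+ (tau - taun)) / zeta imin e) * (lambda * e)
     + p * ((1 - (1 - zeta imin e) ^+ tau) / zeta imin e)
         * (- lambda * e + zeta imin e * beta)).

Definition tVu (R : realFieldType) (K : nat) (E : seq R) (zeta : 'I_K -> R -> R)
  (imin imax : 'I_K) (beta lambda p : R) (taun : nat) (tau : nat) : R :=
  if (tau < taun)%N then Vu E zeta imin imax beta lambda tau else
  \sum_(taun.+1 <= z < tau.+1)
     maxE E (fun e => - lambda * e + zeta imax e *
        (p * beta - Num.max 0 (Num.max (tVl E zeta imin beta lambda p taun taun)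
                                       (tVl E zeta imin beta lambda p taun z.-1))))
  + p * \sum_(1 <= z < taun.+1)
     maxE E (fun e => - lambda * e + zeta imax e *
                (beta - Num.max 0 (Vl E zeta imin beta lambda z.-1))).

(* Main.v *)
Require Import Defs.
From HB Require Import structures.
From mathcomp Require Import all_boot all_order all_algebra.
From mathcomp Require Import ring lra zify.
Import Order.TTheory GRing.Theory Num.Theory.
Local Open Scope ring_scope.

Lemma maxl_ge (R : realFieldType) (s : seq R) x : x \in s -> x <= maxl s.
Proof.
case: s => [|y s] //=.
elim: s y => [|a s IH] y /=; first by rewrite inE => /eqP->.
rewrite !inE => /or3P[xy| /eqP-> | xs].
- rewrite le_max; apply/orP; right; apply: IH; by rewrite inE xy.
- by rewrite le_max lexx.
- rewrite le_max; apply/orP; right; apply: IH; by rewrite inE xs orbT.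
Qed.

Lemma maxl_le (R : realFieldType) (s : seq R) b :
  (forall x, x \in s -> x <= b) -> s != [::] -> maxl s <= b.
Proof.
case: s => [|y s] // H _ /=.
elim: s y H => [|a s IH] y H /=; first by apply: H; exact: mem_head.
rewrite ge_max H ?inE ?eqxx ?orbT //=.
apply: IH => x; rewrite inE => /orP[/eqP->|xs]; apply: H; rewrite !inE ?eqxx //.
by rewrite xs !orbT.
Qed.

Lemma maxE_ge (R : realFieldType) (E : seq R) f e : e \in E -> f e <= maxE E f.
Proof. by move=> eE; apply: maxl_ge; apply: map_f. Qed.

Lemma maxE_le (R : realFieldType) (E : seq R) f b : E != [::] ->
  (forall e, e \in E -> f e <= b) -> maxE E f <= b.
Proof.
move=> hE H; apply: maxl_le; last by case: E hE {H}.
by move=> x /mapP[e eE ->]; apply: H.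
Qed.

Lemma maxEpos_ge (R : realFieldType) (E : seq R) f e : e \in E -> 0 < e -> f e <= maxEpos E f.
Proof. by move=> eE ep; apply: maxl_ge; apply: map_f; rewrite mem_filter ep. Qed.

Lemma maxEpos_le (R : realFieldType) (E : seq R) f b : (exists2 e, e \in E & 0 < e) ->
  (forall e, e \in E -> 0 < e -> f e <= b) -> maxEpos E f <= b.
Proof.
move=> [e0 e0E e0p] H; apply: maxl_le.
  by move=> x /mapP[e]; rewrite mem_filter => /andP[ep eE] ->; apply: H.
apply/eqP => /(f_equal size); rewrite size_map => /eqP; rewrite size_eq0 => /eqP h.
by move: (mem_filter (fun e => 0 < e) e0 E); rewrite h e0E e0p.
Qed.

Lemma S_rec (R : realFieldType) (x : R) k : x != 0 ->
  (1 - (1 - x) ^+ k.+1) / x = 1 + (1 - x) * ((1 - (1 - x) ^+ k) / x).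
Proof. move=> hx; rewrite exprS; field. by []. Qed.

Lemma S_ge0 (R : realFieldType) k (x : R) : 0 < x <= 1 -> 0 <= (1 - (1 - x) ^+ k) / x.
Proof.
case/andP=> h0 h1; apply: divr_ge0; last exact: ltW.
rewrite subr_ge0; apply: exprn_ile1; lra.
Qed.

Lemma S_le1 (R : realFieldType) k (x : R) : 0 < x <= 1 -> x * ((1 - (1 - x) ^+ k) / x) <= 1.
Proof.
case/andP=> h0 h1; rewrite mulrC divfK ?gt_eqF //.
have : 0 <= (1 - x) ^+ k by apply: exprn_ge0; lra.
lra.
Qed.

Lemma S_0 (R : realFieldType) (x : R) : (1 - (1 - x) ^+ 0) / x = 0.
Proof. by rewrite expr0 subrr mul0r. Qed.

Lemma conv_ge (R : realFieldType) (K : nat) (P : 'I_K -> 'I_K -> R) i (f : 'I_K -> R) a :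
  (forall j, 0 <= P i j) -> \sum_j P i j = 1 -> (forall j, a <= f j) -> a <= \sum_j P i j * f j.
Proof.
move=> h0 h1 H; have -> : a = \sum_j P i j * a by rewrite -mulr_suml h1 mul1r.
by apply: ler_sum => j _; apply: ler_wpM2l.
Qed.

Lemma conv_le (R : realFieldType) (K : nat) (P : 'I_K -> 'I_K -> R) i (f : 'I_K -> R) a :
  (forall j, 0 <= P i j) -> \sum_j P i j = 1 -> (forall j, f j <= a) -> \sum_j P i j * f j <= a.
Proof.
move=> h0 h1 H; have -> : a = \sum_j P i j * a by rewrite -mulr_suml h1 mul1r.
by apply: ler_sum => j _; apply: ler_wpM2l.
Qed.

Lemma VI_le (R : realFieldType) (K : nat) (P : 'I_K -> 'I_K -> R) (E : seq R)
  (zeta : 'I_K -> R -> R) (beta lambda p : R) (taun t : nat) (i : 'I_K) :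
  (t.+1 <= taun)%N ->
  VI P E zeta beta lambda p taun t.+1 i =
  maxE E (fun e => - lambda * e + zeta i e * beta + (1 - zeta i e) *
     \sum_j P i j * VI P E zeta beta lambda p taun t j).
Proof. by move=> h /=; rewrite h. Qed.

Lemma VI_eq (R : realFieldType) (K : nat) (P : 'I_K -> 'I_K -> R) (E : seq R)
  (zeta : 'I_K -> R -> R) (beta lambda p : R) (taun : nat) (i : 'I_K) :
  VI P E zeta beta lambda p taun taun.+1 i =
  maxE E (fun e => - lambda * e + zeta i e * p * beta + p * (1 - zeta i e) *
     \sum_j P i j * VI P E zeta beta lambda p taun taun j).
Proof. by rewrite /= ltnn eqxx. Qed.

Lemma VI_gt (R : realFieldType) (K : nat) (P : 'I_K -> 'I_K -> R) (E : seq R)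
  (zeta : 'I_K -> R -> R) (beta lambda p : R) (taun t : nat) (i : 'I_K) :
  (taun < t)%N ->
  VI P E zeta beta lambda p taun t.+1 i =
  maxE E (fun e => - lambda * e + zeta i e * p * beta + (1 - zeta i e) *
     \sum_j P i j * VI P E zeta beta lambda p taun t j).
Proof.
move=> h /=; have -> : (t.+1 <= taun)%N = false by lia.
by have -> : (t.+1 == taun.+1) = false by apply/eqP; lia.
Qed.

Theorem theorem9 (R : realFieldType) (K : nat)
  (P : 'I_K -> 'I_K -> R) (E : seq R) (zeta : 'I_K -> R -> R)
  (imin imax : 'I_K) (beta lambda p : R) (taun Dn : nat)
  (* parameters *)
  (hbeta : 0 <= beta) (hlambda : 0 <= lambda) (hp0 : 0 < p) (hp1 : p <= 1)
  (htaun : (1 <= taun)%N) (hDn : (1 <= Dn)%N)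
  (* Markov chain: stochastic transition matrix *)
  (hP0 : forall i j, 0 <= P i j) (hP1 : forall i, \sum_j P i j = 1)
  (* finite energy set E in [0, oo) containing 0 and a positive element *)
  (hE0 : 0 \in E) (hEpos : exists2 e, e \in E & 0 < e)
  (hEnn : forall e, e \in E -> 0 <= e)
  (* success probabilities *)
  (hz01 : forall i e, e \in E -> 0 <= zeta i e <= 1)
  (hz0 : forall i, zeta i 0 = 0)
  (hzpos : forall i e, e \in E -> 0 < e -> 0 < zeta i e)
  (* zeta(i,.) is the restriction to E of a concave strictly increasing function *)
  (hzconc : forall i, exists g : R -> R,
      [/\ forall e, e \in E -> g e = zeta i e,
          forall x y, 0 <= x -> x < y -> g x < g y &
          forall x y t, 0 <= x -> 0 <= y -> 0 <= t <= 1 ->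
             t * g x + (1 - t) * g y <= g (t * x + (1 - t) * y)])
  (* states totally ordered by zeta; extremal states *)
  (hzord : forall i j, (forall e, e \in E -> zeta j e <= zeta i e) \/
                       (forall e, e \in E -> zeta i e <= zeta j e))
  (himax : forall i e, e \in E -> zeta i e <= zeta imax e)
  (himin : forall i e, e \in E -> zeta imin e <= zeta i e) :
  forall (i : 'I_K) (w : nat), (1 <= w <= Dn)%N ->
    Num.max 0 (Num.max (tVl E zeta imin beta lambda p taun taun)
                       (tVl E zeta imin beta lambda p taun (taun + w)))
      <= VI P E zeta beta lambda p taun (taun + w) i
    /\ VI P E zeta beta lambda p taun (taun + w) i
      <= Num.min (p * beta) (tVu E zeta imin imax beta lambda p taun (taun + w)).
Proof.
have hEne : E != [::] by move: hE0; case: (E).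
pose V := VI P E zeta beta lambda p taun.
have VlLe : forall t x, 0 <= x ->
   (forall e, e \in E -> 0 < e ->
      (1 - (1 - zeta imin e)^+t)/zeta imin e * (-lambda*e + zeta imin e * beta) <= x) ->
   Vl E zeta imin beta lambda t <= x.
  by case => [|k] x h0 h //=; apply: maxEpos_le.
have VuS : forall t, Vu E zeta imin imax beta lambda t.+1 =
   Vu E zeta imin imax beta lambda t + maxE E (fun e => - lambda * e + zeta imax e *
                (beta - Num.max 0 (Vl E zeta imin beta lambda t))).
  by move=> t; rewrite /Vu big_nat_recr.
have P1 : forall t, (t <= taun)%N -> forall i,
  [/\ 0 <= V t i, V t i <= beta,
      (forall e, e \in E -> 0 < e -> (1 - (1 - zeta imin e)^+t)/zeta imin e *
          (-lambda*e + zeta imin e * beta) <= V t i)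
    & V t i <= Vu E zeta imin imax beta lambda t].
  elim => [|t IH] ht i.
    split => //=; first by move=> e _ _; rewrite S_0 mul0r.
    by rewrite /Vu big_geq.
  have IH' := IH (ltnW ht).
  set cc := \sum_j P i j * V t j.
  have c0 : 0 <= cc by apply: conv_ge => // j; case: (IH' j).
  have cb : cc <= beta by apply: conv_le => // j; case: (IH' j).
  have cL : forall e, e \in E -> 0 < e -> (1 - (1 - zeta imin e)^+t)/zeta imin e *
          (-lambda*e + zeta imin e * beta) <= cc.
    by move=> e eE ep; apply: conv_ge => // j; case: (IH' j) => _ _ H _; apply: H.
  have cU : cc <= Vu E zeta imin imax beta lambda t by apply: conv_le => // j; case: (IH' j).
  have cVl : Vl E zeta imin beta lambda t <= cc by apply: VlLe.
  rewrite /V VI_le // -/V -/cc.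
  split.
  - apply: le_trans (maxE_ge _ _ _ _ hE0); rewrite hz0; lra.
  - apply: maxE_le => // e eE.
    have /andP[z0 z1] := hz01 i e eE.
    have := mulr_ge0 hlambda (hEnn e eE).
    have : 0 <= (1 - zeta i e) * (beta - cc) by apply: mulr_ge0; lra.
    lra.
  - move=> e eE ep; apply: le_trans (maxE_ge _ _ _ _ eE).
    have zp := hzpos imin e eE ep.
    have /andP[zm0 zm1] := hz01 imin e eE.
    have /andP[z0 z1] := hz01 i e eE.
    have zmi := himin i e eE.
    have hL := cL e eE ep.
    rewrite S_rec ?gt_eqF //.
    have zz : 0 < zeta imin e <= 1 by rewrite zp zm1.
    have s0 := S_ge0 _ t _ zz.
    have s1 := S_le1 _ t _ zz.
    move: hL s0 s1.
    set s := (1 - (1 - zeta imin e)^+t)/zeta imin e.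
    move=> hL s0 s1.
    have le1 : 0 <= s * (lambda * e) by apply: mulr_ge0 => //; apply: mulr_ge0 => //; exact: hEnn.
    have le2 : 0 <= (1 - zeta imin e * s) * beta by apply: mulr_ge0; lra.
    have Lb : s * (- lambda * e + zeta imin e * beta) <= beta by lra.
    have le3 : 0 <= (zeta i e - zeta imin e) * (beta - s * (- lambda * e + zeta imin e * beta)) by apply: mulr_ge0; lra.
    have le4 : 0 <= (1 - zeta i e) * (cc - s * (- lambda * e + zeta imin e * beta)) by apply: mulr_ge0; lra.
    lra.
  - rewrite VuS; apply: maxE_le => // e eE.
    have /andP[z0 z1] := hz01 i e eE.
    have zmx := himax i e eE.
    apply: le_trans (_ : Vu E zeta imin imax beta lambda t + (- lambda * e + zeta imax e *
                (beta - Num.max 0 (Vl E zeta imin beta lambda t))) <= _); last first.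
      by rewrite lerD2l; apply: (maxE_ge _ _ (fun e => - lambda * e + zeta imax e *
                (beta - Num.max 0 (Vl E zeta imin beta lambda t)))).
    have hM : Num.max 0 (Vl E zeta imin beta lambda t) <= cc by rewrite ge_max c0 cVl.
    move: hM; set M := Num.max 0 _ => hM.
    have le1 : 0 <= (zeta imax e - zeta i e) * (beta - cc) by apply: mulr_ge0; lra.
    have le2 : 0 <= zeta imax e * (cc - M) by apply: mulr_ge0; lra.
    lra.
have tVlLe : forall t x, (taun <= t)%N -> (forall e, e \in E -> 0 < e -> (- (1 - p) * ((1 - (1 - zeta imin e) ^+ (t - taun)) / zeta imin e) * (lambda * e) + p * ((1 - (1 - zeta imin e) ^+ t) / zeta imin e) * (- lambda * e + zeta imin e * beta)) <= x) ->
   tVl E zeta imin beta lambda p taun t <= x.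
  by move=> t x h H; rewrite /tVl ltnNge h /=; exact: maxEpos_le.
have tVl0 : forall x, (forall e, e \in E -> 0 < e ->
    (1 - (1 - zeta imin e)^+taun)/zeta imin e * (-lambda*e + zeta imin e * beta) <= x) ->
    tVl E zeta imin beta lambda p taun taun <= p * x.
  move=> x H; apply: tVlLe => // e eE ep.
  rewrite subnn S_0 mulr0 mul0r add0r -mulrA; apply: ler_wpM2l; [lra | exact: H].
have tVuB : tVu E zeta imin imax beta lambda p taun taun.+1 = maxE E (fun e => - lambda * e + zeta imax e *
        (p * beta - Num.max 0 (Num.max (tVl E zeta imin beta lambda p taun taun) (tVl E zeta imin beta lambda p taun taun)))) + p * Vu E zeta imin imax beta lambda taun.
  rewrite /tVu; have -> : (taun.+1 < taun)%N = false by lia.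
  by rewrite big_nat1.
have tVuS : forall t, (taun < t)%N -> tVu E zeta imin imax beta lambda p taun t.+1 = tVu E zeta imin imax beta lambda p taun t + maxE E (fun e => - lambda * e + zeta imax e *
        (p * beta - Num.max 0 (Num.max (tVl E zeta imin beta lambda p taun taun) (tVl E zeta imin beta lambda p taun t)))).
  move=> t h; rewrite /tVu; have -> : (t.+1 < taun)%N = false by lia.
  have -> : (t < taun)%N = false by lia.
  have h' : (taun.+1 <= t.+1)%N by apply: leqW.
  by rewrite (big_nat_recr _ _ _ h') addrAC.
have P2 : forall w, (1 <= w)%N -> forall i,
  [/\ 0 <= V (taun + w)%N i, V (taun + w)%N i <= p * beta, tVl E zeta imin beta lambda p taun taun <= V (taun + w)%N i,
      (forall e, e \in E -> 0 < e -> (- (1 - p) * ((1 - (1 - zeta imin e) ^+ (taun + w - taun)%N) / zeta imin e) * (lambda * e) + p * ((1 - (1 - zeta imin e) ^+ (taun + w)%N) / zeta imin e) * (- lambda * e + zeta imin e * beta)) <= V (taun + w)%N i)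
    & V (taun + w)%N i <= tVu E zeta imin imax beta lambda p taun (taun + w)%N].
  elim => [//|w IH] _ i.
  case: (posnP w) => [-> | wpos].
    rewrite !addn1.
    have P1' := P1 taun (leqnn _).
    set cc := \sum_j P i j * V taun j.
    have c0 : 0 <= cc by apply: conv_ge => // j; case: (P1' j).
    have cb : cc <= beta by apply: conv_le => // j; case: (P1' j).
    have cL : forall e, e \in E -> 0 < e -> (1 - (1 - zeta imin e)^+taun)/zeta imin e *
          (-lambda*e + zeta imin e * beta) <= cc.
      by move=> e eE ep; apply: conv_ge => // j; case: (P1' j) => _ _ H _; apply: H.
    have cU : cc <= Vu E zeta imin imax beta lambda taun by apply: conv_le => // j; case: (P1' j).
    have cT := tVl0 cc cL.
    have pc0 := mulr_ge0 (ltW hp0) c0.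
    rewrite /V VI_eq -/V -/cc.
    split.
    - apply: le_trans (maxE_ge _ _ _ _ hE0); rewrite hz0; lra.
    - apply: maxE_le => // e eE.
      have /andP[z0 z1] := hz01 i e eE.
      have := mulr_ge0 hlambda (hEnn e eE).
      have : 0 <= p * ((1 - zeta i e) * (beta - cc)) by apply: mulr_ge0; [lra|apply: mulr_ge0; lra].
      lra.
    - apply: le_trans cT _; apply: le_trans (maxE_ge _ _ _ _ hE0); rewrite hz0; lra.
    - move=> e eE ep; apply: le_trans (maxE_ge _ _ _ _ eE).
      have zp := hzpos imin e eE ep.
      have /andP[zm0 zm1] := hz01 imin e eE.
      have /andP[z0 z1] := hz01 i e eE.
      have zmi := himin i e eE.
      have hL := cL e eE ep.
      have S1 : (1 - (1 - zeta imin e)^+1)/zeta imin e = 1.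
        by rewrite expr1; field; rewrite gt_eqF.
      rewrite subSnn S1 S_rec ?gt_eqF //.
      have zz : 0 < zeta imin e <= 1 by rewrite zp zm1.
      have s0 := S_ge0 _ taun _ zz.
      have s1 := S_le1 _ taun _ zz.
      move: hL s0 s1.
      set s := (1 - (1 - zeta imin e)^+taun)/zeta imin e.
      move=> hL s0 s1.
      have le1 : 0 <= s * (lambda * e) by apply: mulr_ge0 => //; apply: mulr_ge0 => //; exact: hEnn.
      have le2 : 0 <= (1 - zeta imin e * s) * beta by apply: mulr_ge0; lra.
      have Lb : s * (- lambda * e + zeta imin e * beta) <= beta by lra.
      have le3 : 0 <= p * ((zeta i e - zeta imin e) * (beta - s * (- lambda * e + zeta imin e * beta))).
        by apply: mulr_ge0; [lra | apply: mulr_ge0; lra].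
      have le4 : 0 <= p * ((1 - zeta i e) * (cc - s * (- lambda * e + zeta imin e * beta))).
        by apply: mulr_ge0; [lra | apply: mulr_ge0; lra].
      lra.
    - rewrite tVuB; apply: maxE_le => // e eE.
      have /andP[z0 z1] := hz01 i e eE.
      have zmx := himax i e eE.
      apply: le_trans (_ : (- lambda * e + zeta imax e *
        (p * beta - Num.max 0 (Num.max (tVl E zeta imin beta lambda p taun taun) (tVl E zeta imin beta lambda p taun taun)))) + p * Vu E zeta imin imax beta lambda taun <= _); last first.
        by rewrite lerD2r; apply: (maxE_ge _ _ (fun e => - lambda * e + zeta imax e *
        (p * beta - Num.max 0 (Num.max (tVl E zeta imin beta lambda p taun taun) (tVl E zeta imin beta lambda p taun taun))))).
      have hM : Num.max 0 (Num.max (tVl E zeta imin beta lambda p taun taun) (tVl E zeta imin beta lambda p taun taun)) <= p * cc by rewrite !ge_max pc0 cT.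
      move: hM; set M := Num.max 0 _ => hM.
      have le1 : 0 <= (zeta imax e - zeta i e) * (p * beta - p * cc).
        apply: mulr_ge0; first lra.
        have := ler_wpM2l (ltW hp0) cb; lra.
      have le2 : 0 <= zeta imax e * (p * cc - M) by apply: mulr_ge0; lra.
      have le3 : 0 <= p * (Vu E zeta imin imax beta lambda taun - cc) by apply: mulr_ge0; lra.
      lra.
  have IH' := IH wpos.
  rewrite addnS.
  set cc := \sum_j P i j * V (taun + w)%N j.
  have c0 : 0 <= cc by apply: conv_ge => // j; case: (IH' j).
  have cb : cc <= p * beta by apply: conv_le => // j; case: (IH' j).
  have cT : tVl E zeta imin beta lambda p taun taun <= cc by apply: conv_ge => // j; case: (IH' j).
  have cF : forall e, e \in E -> 0 < e -> (- (1 - p) * ((1 - (1 - zeta imin e) ^+ (taun + w - taun)%N) / zeta imin e) * (lambda * e) + p * ((1 - (1 - zeta imin e) ^+ (taun + w)%N) / zeta imin e) * (- lambda * e + zeta imin e * beta)) <= cc.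
    by move=> e eE ep; apply: conv_ge => // j; case: (IH' j) => _ _ _ H _; apply: H.
  have cU : cc <= tVu E zeta imin imax beta lambda p taun (taun + w)%N by apply: conv_le => // j; case: (IH' j).
  have cTL : tVl E zeta imin beta lambda p taun (taun + w)%N <= cc by apply: tVlLe => //; apply: leq_addr.
  have ltw : (taun < taun + w)%N by rewrite -{1}[taun]addn0 ltn_add2l.
  rewrite /V VI_gt -/V -/cc; last exact: ltw.
  split.
  - apply: le_trans (maxE_ge _ _ _ _ hE0); rewrite hz0; lra.
  - apply: maxE_le => // e eE.
    have /andP[z0 z1] := hz01 i e eE.
    have := mulr_ge0 hlambda (hEnn e eE).
    have : 0 <= (1 - zeta i e) * (p * beta - cc) by apply: mulr_ge0; lra.
    lra.
  - apply: le_trans cT _; apply: le_trans (maxE_ge _ _ _ _ hE0); rewrite hz0; lra.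
  - move=> e eE ep; apply: le_trans (maxE_ge _ _ _ _ eE).
    have zp := hzpos imin e eE ep.
    have /andP[zm0 zm1] := hz01 imin e eE.
    have /andP[z0 z1] := hz01 i e eE.
    have zmi := himin i e eE.
    have hF := cF e eE ep.
    rewrite subSn ?leq_addr // !S_rec ?gt_eqF //.
    have zz : 0 < zeta imin e <= 1 by rewrite zp zm1.
    have s10 := S_ge0 _ (taun + w - taun)%N _ zz.
    have s20 := S_ge0 _ (taun + w)%N _ zz.
    have s21 := S_le1 _ (taun + w)%N _ zz.
    move: hF s10 s20 s21.
    set s1 := (1 - (1 - zeta imin e)^+(taun + w - taun)%N)/zeta imin e.
    set s2 := (1 - (1 - zeta imin e)^+(taun + w)%N)/zeta imin e.
    move=> hF s10 s20 s21.
    have le0 : 0 <= lambda * e by apply: mulr_ge0 => //; exact: hEnn.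
    have le1 : 0 <= (1 - p) * (s1 * (lambda * e)) by apply: mulr_ge0; [lra | apply: mulr_ge0].
    have le2 : 0 <= p * (s2 * (lambda * e)) by apply: mulr_ge0; [lra | apply: mulr_ge0].
    have le3 : 0 <= p * ((1 - zeta imin e * s2) * beta) by apply: mulr_ge0; [lra | apply: mulr_ge0; lra].
    set Ft := - (1 - p) * s1 * (lambda * e) + p * s2 * (- lambda * e + zeta imin e * beta).
    have Fb : Ft <= p * beta by rewrite /Ft; lra.
    have le4 : 0 <= (zeta i e - zeta imin e) * (p * beta - Ft) by apply: mulr_ge0; lra.
    have le5 : 0 <= (1 - zeta i e) * (cc - Ft) by apply: mulr_ge0; rewrite /Ft; lra.
    rewrite /Ft in le4 le5; lra.
  - rewrite tVuS; last exact: ltw.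
    apply: maxE_le => // e eE.
    have /andP[z0 z1] := hz01 i e eE.
    have zmx := himax i e eE.
    apply: le_trans (_ : tVu E zeta imin imax beta lambda p taun (taun + w)%N + (- lambda * e + zeta imax e *
        (p * beta - Num.max 0 (Num.max (tVl E zeta imin beta lambda p taun taun) (tVl E zeta imin beta lambda p taun (taun + w)%N)))) <= _); last first.
      by rewrite lerD2l; apply: (maxE_ge _ _ (fun e => - lambda * e + zeta imax e *
        (p * beta - Num.max 0 (Num.max (tVl E zeta imin beta lambda p taun taun) (tVl E zeta imin beta lambda p taun (taun + w)%N))))).
    have hM : Num.max 0 (Num.max (tVl E zeta imin beta lambda p taun taun) (tVl E zeta imin beta lambda p taun (taun + w)%N)) <= cc by rewrite !ge_max c0 cT cTL.
    move: hM; set M := Num.max 0 _ => hM.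
    have le1 : 0 <= (zeta imax e - zeta i e) * (p * beta - cc) by apply: mulr_ge0; lra.
    have le2 : 0 <= zeta imax e * (cc - M) by apply: mulr_ge0; lra.
    lra.
move=> i w /andP[hw1 hwD].
have E1 : (taun + w)%R = (taun + w)%N :> nat by [].
rewrite ?E1.
have [a b c d f] := P2 w hw1 i.
split.
  by rewrite !ge_max a c /=; apply: tVlLe; [apply: leq_addr | exact: d].
by rewrite le_min b f.
Qed.
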